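(* Fix $m\ge1$, write $x=t_m$, and let $x\mapsto H(x)$ be an integral curve of $X_m$ in $\mathcal H$. Define the differential Faà di Bruno basis $\{F^{(j)}\}_{j\in\mathbb Z}$ at each $x$ by $F^{(a)}=H^{(a)}$ for $a=0,\dots,m-1$ and $F^{(j+m)}=(\partial_x+H^{(m)})F^{(j)}$ for all $j\in\mathbb Z$ (for $j<0$, $F^{(j)}$ is the unique Laurent series in $z$ with $x$-dependent coefficients satisfying this relation; $F^{(j)}=z^j+$lower order). Let $\widetilde{\mathcal H}_+$ be the span of $\{F^{(j)}\}_{j\ge0}$ and $\widetilde{\mathcal H}_-$ the space of (possibly infinite) combinations of $\{F^{(j)}\}_{j<0}$, with coefficients functions of $x$, and let $\tilde\pi_\pm$ be the projections of $\mathcal L=\widetilde{\mathcal H}_+\oplus\widetilde{\mathcal H}_-$. Then $H^{(j)}(x)=\tilde\pi_+(z^j)$ for all $j\ge0$, and the flows induced by the $X_j$ on the orbit space $\mathcal Q_m$ (coordinatized by $(H^{(1)}(x),\dots,H^{(m)}(x))$) are $$\frac{\partial H^{(a)}}{\partial t_j}=-\tilde\pi_-\big(H^{(a)}\,\tilde\pi_+(z^j)\big),\qquad a=1,\dots,m,\ j\ge1 .$$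
   Context: Let $z$ be a formal variable and $\mathcal L$ the space of formal Laurent series $\sum_{j\le N} l_j z^j$ (finitely many positive powers of $z$), here with coefficients functions of $x$. Let $\mathcal H$ be the set of sequences $H=(H^{(k)})_{k\ge0}$ with $H^{(0)}=1$ and, for $k\ge1$, $H^{(k)}=z^k+\sum_{l\ge1}H^k_l z^{-l}$; set $H^0_l=0$. The central system (CS) is the family of commuting vector fields $X_j$, $j\ge1$, on $\mathcal H$, with times $t_j$, defined by $$\frac{\partial H^{(k)}}{\partial t_j}=H^{(j+k)}-H^{(j)}H^{(k)}+\sum_{l=1}^{k}H^j_lH^{(k-l)}+\sum_{l=1}^{j}H^k_lH^{(j-l)},\qquad k\ge0.$$ $\mathcal Q_m$ is the space of integral curves (orbits) of $X_m$; an integral curve is determined by its first $m$ currents $H^{(1)}(x),\dots,H^{(m)}(x)$, and since the $X_j$ commute with $X_m$ they induce flows on $\mathcal Q_m$. *)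

(* Defs.v *)
From HB Require Import structures.
From mathcomp Require Import all_boot all_order all_algebra zify.
Set Implicit Arguments. Unset Strict Implicit. Unset Printing Implicit Defensive.
Import Order.TTheory GRing.Theory Num.Theory.
Local Open Scope ring_scope.

(* Formal Laurent series  sum_{n <= N} l_n z^n  with
   coefficients in a commutative differential ring A (the "functions of x"). *)

Local Obligation Tactic := idtac.

Section Laurent.
Variable A : comPzRingType.

Record laurent := Laurent {
  lcoef : int -> A;
  lbound : int;
  lboundP : forall n : int, lbound < n -> lcoef n = 0 }.

Definition leqL (f g : laurent) : Prop := forall n : int, lcoef f n = lcoef g n.

Definition trunc (z : int) : nat := match z with Posz k => k | Negz _ => 0%N end.

Program Definition lzero : laurent := @Laurent (fun _ => 0) 0 _.
Next Obligation. by []. Qed.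

Program Definition lmono (k : int) : laurent :=
  @Laurent (fun n => if n == k then 1 else 0) k _.
Next Obligation. by move=> k n hn /=; rewrite (gt_eqF hn). Qed.

Program Definition ladd (f g : laurent) : laurent :=
  @Laurent (fun n => lcoef f n + lcoef g n) (Num.max (lbound f) (lbound g)) _.
Next Obligation.
move=> f g n /=; rewrite gt_max => /andP[hf hg].
by rewrite (lboundP hf) (lboundP hg) addr0.
Qed.

Program Definition lopp (f : laurent) : laurent :=
  @Laurent (fun n => - lcoef f n) (lbound f) _.
Next Obligation. by move=> f n hn /=; rewrite (lboundP hn) oppr0. Qed.

Definition lsub (f g : laurent) : laurent := ladd f (lopp g).

Program Definition lscale (c : A) (f : laurent) : laurent :=
  @Laurent (fun n => c * lcoef f n) (lbound f) _.
Next Obligation. by move=> c f n hn /=; rewrite (lboundP hn) mulr0. Qed.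

(* Cauchy product: (fg)_n = sum_{n - Ng <= i <= Nf} f_i g_(n-i) *)
Program Definition lmul (f g : laurent) : laurent :=
  @Laurent (fun n => \sum_(k < trunc (lbound f + lbound g - n + 1))
                       lcoef f (n - lbound g + k%:Z) * lcoef g (lbound g - k%:Z))
           (lbound f + lbound g) _.
Next Obligation.
move=> f g n hn /=.
have : lbound f + lbound g - n + 1 <= 0.
  by move: hn; lia.
case: (lbound f + lbound g - n + 1) => [k|k] /=; last by rewrite big_ord0.
by rewrite lez_nat leqn0 => /eqP ->; rewrite big_ord0.
Qed.

Variable d : {additive A -> A}.
Program Definition lderiv (f : laurent) : laurent :=
  @Laurent (fun n => d (lcoef f n)) (lbound f) _.
Next Obligation. by move=> f n hn /=; rewrite (lboundP hn) raddf0. Qed.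

End Laurent.

Arguments lzero {A}.
Arguments lmono {A}.

Definition is_derivation (A : comPzRingType) (d : {additive A -> A}) : Prop :=
  forall a b : A, d (a * b) = d a * b + a * d b.

Definition lsum (A : comPzRingType) (n : nat) (F : nat -> laurent A) : laurent A :=
  \big[@ladd A/lzero]_(i < n) F i.

(* A point of H is given by the coefficients h k l = H^k_l (k, l >= 1);
   the values h 0 _ and h _ 0 are irrelevant: Hc enforces H^0_l = 0. *)
Definition Hc (A : comPzRingType) (h : nat -> nat -> A) (k l : nat) : A :=
  if (k == 0)%N || (l == 0)%N then 0 else h k l.

(* H^(k) = z^k + sum_{l>=1} H^k_l z^{-l}  (H^(0) = 1) *)
Program Definition Hs (A : comPzRingType) (h : nat -> nat -> A) (k : nat) : laurent A :=
  @Laurent A (fun n => (if n == k%:Z then 1 else 0) + (if n < 0 then Hc h k `|n|%N else 0))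
           k%:Z _.
Next Obligation.
move=> A h k n hn /=.
have hn0 : ~~ (n < 0) by rewrite -leNgt; apply: le_trans (ltW hn).
by rewrite (negbTE hn0) (gt_eqF hn) addr0.
Qed.

(* right-hand side of the central system: d H^(k) / d t_j *)
Definition CS (A : comPzRingType) (h : nat -> nat -> A) (j k : nat) : laurent A :=
  ladd (lsub (Hs h (j + k)) (lmul (Hs h j) (Hs h k)))
       (ladd (lsum k (fun i => lscale (Hc h j i.+1) (Hs h (k - i.+1))))
             (lsum j (fun i => lscale (Hc h k i.+1) (Hs h (j - i.+1))))).

(* x |-> H(x) is an integral curve of X_m, with x = t_m and d = d/dx *)
Definition integral_curve (A : comPzRingType) (d : {additive A -> A})
    (h : nat -> nat -> A) (m : nat) : Prop :=
  forall k : nat, leqL (lderiv d (Hs h k)) (CS h m k).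

Definition is_FdB (A : comPzRingType) (d : {additive A -> A})
    (h : nat -> nat -> A) (m : nat) (F : int -> laurent A) : Prop :=
  [/\ forall a : nat, (a < m)%N -> leqL (F a%:Z) (Hs h a),
      forall j : int, leqL (F (j + m%:Z)) (ladd (lderiv d (F j)) (lmul (Hs h m) (F j)))
    & forall j : int, lcoef (F j) j = 1 /\ forall n : int, j < n -> lcoef (F j) n = 0].

(* f = sum_j c_j F^(j), with c_j = 0 for j > N (finite positive part, possibly
   infinite negative part; the n-th coefficient only involves j >= n since
   F^(j) = z^j + lower order terms) *)
Definition decomp (A : comPzRingType) (F : int -> laurent A) (f : laurent A)
    (c : int -> A) (N : nat) : Prop :=
  (forall j : int, N%:Z < j -> c j = 0) /\
  forall n : int, lcoef f n =
    \sum_(k < trunc (N%:Z - n + 1)) c (n + k%:Z) * lcoef (F (n + k%:Z)) n.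

Definition piplus (A : comPzRingType) (F : int -> laurent A) (c : int -> A) (N : nat)
    : laurent A :=
  lsum N.+1 (fun j => lscale (c j%:Z) (F j%:Z)).

Definition piminus (A : comPzRingType) (F : int -> laurent A) (f : laurent A)
    (c : int -> A) (N : nat) : laurent A :=
  lsub f (piplus F c N).

(* Main.v *)
Require Import Defs.
From HB Require Import structures.
From mathcomp Require Import all_boot all_order all_algebra zify ring.
Import Order.TTheory GRing.Theory Num.Theory.
Set Implicit Arguments. Unset Strict Implicit. Unset Printing Implicit Defensive.
Local Open Scope ring_scope.

Lemma trunc_ge (x : int) : x <= (trunc x)%:Z.
Proof. by case: x => [k|k] //=; rewrite lez_nat. Qed.

Lemma truncK (x : int) : 0 <= x -> (trunc x)%:Z = x.
Proof. by case: x. Qed.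

Lemma trunc_le0 (x : int) : x <= 0 -> trunc x = 0%N.
Proof. by case: x => [k|k] //=; rewrite lez_nat leqn0 => /eqP. Qed.

Definition Ssum (A : comPzRingType) (f g : laurent A) (n B : int) (L : nat) : A :=
  \sum_(k < L) lcoef f (n - B + k%:Z) * lcoef g (B - k%:Z).

Lemma lmul_S (A : comPzRingType) (f g : laurent A) n :
  lcoef (lmul f g) n = Ssum f g n (lbound g) (trunc (lbound f + lbound g - n + 1)).
Proof. by []. Qed.

Lemma shiftB (A : comPzRingType) (f g : laurent A) n B (D L : nat) :
  (forall k, B < k -> lcoef g k = 0) ->
  Ssum f g n (B + D%:Z) (D + L) = Ssum f g n B L.
Proof.
move=> hg; rewrite /Ssum big_split_ord /= big1 ?add0r.
  apply: eq_bigr => i _ /=; congr (lcoef f _ * lcoef g _); lia.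
move=> i _ /=; rewrite hg ?mulr0 //; have := ltn_ord i; lia.
Qed.

Lemma extL (A : comPzRingType) (f g : laurent A) n B (L L' : nat) :
  (forall k : nat, (L <= k)%N -> lcoef f (n - B + k%:Z) = 0) -> (L <= L')%N ->
  Ssum f g n B L' = Ssum f g n B L.
Proof.
move=> hf hL; rewrite /Ssum -(subnKC hL) big_split_ord /=.
rewrite [X in _ + X]big1 ?addr0 //.
move=> i _; rewrite hf ?mul0r //; lia.
Qed.

Lemma lmulE (A : comPzRingType) (f g : laurent A) n (Bf Bg : int) (L : nat) :
  (forall k, Bf < k -> lcoef f k = 0) -> (forall k, Bg < k -> lcoef g k = 0) ->
  Bf + Bg - n + 1 <= L%:Z ->
  lcoef (lmul f g) n = Ssum f g n Bg L.
Proof.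
move=> hf hg hL; rewrite lmul_S.
set lg := lbound g; set lf := lbound f.
set T := trunc (lf + lg - n + 1).
set D1 := trunc (Bg - lg); set D2 := trunc (lg - Bg).
have hT := trunc_ge (lf + lg - n + 1).
have hD : lg + D1%:Z = Bg + D2%:Z.
  case: (leP lg Bg) => h.
    rewrite /D1 /D2 truncK ?subr_ge0 // trunc_le0; lia.
  rewrite /D1 /D2 (trunc_le0 (x := Bg - lg)) ?truncK; lia.
have e1 : Ssum f g n lg T = Ssum f g n (lg + D1%:Z) (D1 + (T + L + D2)).
  rewrite shiftB; last by move=> k hk; apply: lboundP.
  symmetry; apply: extL; last by lia.
  move=> k hk; apply: lboundP; rewrite -/lf; lia.
have e2 : Ssum f g n Bg L = Ssum f g n (Bg + D2%:Z) (D2 + (T + L + D1)).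
  rewrite shiftB //.
  symmetry; apply: extL; last by lia.
  move=> k hk; apply: hf; lia.
rewrite e1 e2 hD; congr Ssum; lia.
Qed.

Lemma lcoef_lsum (A : comPzRingType) (N : nat) (G : nat -> laurent A) x :
  lcoef (lsum N G) x = \sum_(i < N) lcoef (G i) x.
Proof.
rewrite /lsum; apply: (big_morph (fun g => lcoef g x) (id1 := 0) (op1 := +%R)) => //.
Qed.

Lemma lmul_congr (A : comPzRingType) (f f' g g' : laurent A) :
  leqL f f' -> leqL g g' -> forall n, lcoef (lmul f g) n = lcoef (lmul f' g') n.
Proof.
move=> hf hg n.
have hT := trunc_ge (lbound f + lbound g - n + 1).
rewrite (@lmulE _ f g n (lbound f) (lbound g) _ _ _ hT); try by move=> k hk; apply: lboundP.
rewrite (@lmulE _ f' g' n (lbound f) (lbound g) _ _ _ hT).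
- by apply: eq_bigr => i _; rewrite hf hg.
- by move=> k hk; rewrite -hf; apply: lboundP.
- by move=> k hk; rewrite -hg; apply: lboundP.
Qed.

Lemma lmul_comm (A : comPzRingType) (f g : laurent A) n :
  lcoef (lmul f g) n = lcoef (lmul g f) n.
Proof.
rewrite !lmul_S /Ssum.
rewrite [lbound g + lbound f]addrC.
set X := lbound f + lbound g - n + 1.
rewrite -(big_mkord xpredT (fun k : nat => lcoef f (n - lbound g + k%:Z) * lcoef g (lbound g - k%:Z))) big_rev_mkord subn0.
apply: eq_bigr => i _.
have hi : (i < trunc X)%N := ltn_ord i.
move: (nat_of_ord i) hi => {}i hi.
have hX : (trunc X)%:Z = X.
  apply: truncK; rewrite leNgt; apply/negP => h; move: hi; rewrite trunc_le0 ?ltW //.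
rewrite [RHS]mulrC; congr (lcoef f _ * lcoef g _).
  move: hX hi; rewrite /X; lia.
move: hX hi; rewrite /X; lia.
Qed.

Lemma lmul_lin (A : comPzRingType) (f g : laurent A) (M : nat) (a : nat -> A)
    (G : nat -> laurent A) (B : int) :
  (forall n, lcoef g n = \sum_(i < M) a i * lcoef (G i) n) ->
  (forall (i : nat) k, (i < M)%N -> B < k -> lcoef (G i) k = 0) ->
  forall n, lcoef (lmul f g) n = \sum_(i < M) a i * lcoef (lmul f (G i)) n.
Proof.
move=> hg hG n.
set Bg := Num.max (lbound g) B.
have hL := trunc_ge (lbound f + Bg - n + 1).
have hf : forall k, lbound f < k -> lcoef f k = 0 by move=> k hk; apply: lboundP.
rewrite (@lmulE _ f g n (lbound f) Bg _ hf _ hL); last first.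
  by move=> k; rewrite gt_max => /andP[h1 _]; apply: lboundP.
have e : forall i : 'I_M, lcoef (lmul f (G i)) n = Ssum f (G i) n Bg (trunc (lbound f + Bg - n + 1)).
  move=> i; apply: (@lmulE _ f (G i) n (lbound f) Bg) => // k; rewrite gt_max => /andP[_ h2]; exact: hG.
under [RHS]eq_bigr do rewrite e.
rewrite /Ssum.
under [LHS]eq_bigr do rewrite hg mulr_sumr.
rewrite exchange_big /=; apply: eq_bigr => i _.
rewrite mulr_sumr; apply: eq_bigr => k _; by rewrite mulrCA.
Qed.

Definition inspan (A : comPzRingType) (F : int -> laurent A) (g : int -> A) : Prop :=
  exists (M : nat) (a : nat -> A), forall n, g n = \sum_(i < M) a i * lcoef (F i%:Z) n.

Lemma sum_widen (A : comPzRingType) (M M' : nat) (x : nat -> A) : (M <= M')%N ->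
  \sum_(i < M) x i = \sum_(i < M') (if (i < M)%N then x i else 0).
Proof. by move=> hM; rewrite (big_ord_widen _ x hM) big_mkcond. Qed.

Lemma inspan_ext (A : comPzRingType) (F : int -> laurent A) (g g' : int -> A) :
  (forall n, g' n = g n) -> inspan F g -> inspan F g'.
Proof. by move=> e [M [a ha]]; exists M, a => n; rewrite e ha. Qed.

Lemma inspan0 (A : comPzRingType) (F : int -> laurent A) : inspan F (fun _ => 0).
Proof. by exists 0%N, (fun _ => 0) => n; rewrite big_ord0. Qed.

Lemma inspanD (A : comPzRingType) (F : int -> laurent A) (g1 g2 : int -> A) :
  inspan F g1 -> inspan F g2 -> inspan F (fun n => g1 n + g2 n).
Proof.
move=> [M1 [a1 h1]] [M2 [a2 h2]].
exists (M1 + M2)%N, (fun i => (if (i < M1)%N then a1 i else 0) + (if (i < M2)%N then a2 i else 0)).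
move=> n; rewrite h1 h2 (@sum_widen _ M1 (M1 + M2) (fun i => a1 i * lcoef (F i%:Z) n)) ?leq_addr //.
rewrite (@sum_widen _ M2 (M1 + M2) (fun i => a2 i * lcoef (F i%:Z) n)) ?leq_addl // -big_split /=.
by apply: eq_bigr => i _; rewrite mulrDl; case: ifP; case: ifP; rewrite ?mul0r.
Qed.

Lemma inspanZ (A : comPzRingType) (F : int -> laurent A) (c : A) (g : int -> A) :
  inspan F g -> inspan F (fun n => c * g n).
Proof.
move=> [M [a ha]]; exists M, (fun i => c * a i) => n.
by rewrite ha mulr_sumr; apply: eq_bigr => i _; rewrite mulrA.
Qed.

Lemma inspan_sum (A : comPzRingType) (F : int -> laurent A) (K : nat) (G : nat -> int -> A) :
  (forall i, (i < K)%N -> inspan F (G i)) -> inspan F (fun n => \sum_(i < K) G i n).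
Proof.
elim: K => [|K IH] hG.
  by apply: (inspan_ext _ (inspan0 F)) => n; rewrite big_ord0.
apply: (inspan_ext (g := fun n => \sum_(i < K) G i n + G K n)).
  by move=> n; rewrite big_ord_recr.
apply: inspanD; last exact: hG.
by apply: IH => i hi; apply: hG; apply: ltnW.
Qed.

Lemma inspanF (A : comPzRingType) (F : int -> laurent A) (i : nat) :
  inspan F (lcoef (F i%:Z)).
Proof.
exists i.+1, (fun j => if j == i then 1 else 0) => n.
rewrite big_ord_recr /= eqxx mul1r big1 ?add0r // => j _.
by rewrite (ltn_eqF (ltn_ord j)) mul0r.
Qed.

Lemma deriv_step (A : comPzRingType) (d : {additive A -> A}) (hd : is_derivation d)
    (m : nat) (h : nat -> nat -> A) (F : int -> laurent A) (hF : is_FdB d h m F)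
    (g : laurent A) :
  inspan F (lcoef g) -> inspan F (fun n => d (lcoef g n) + lcoef (lmul (Hs h m) g) n).
Proof.
case: hF => hF1 hF2 hF3.
move=> [M [a ha]].
apply: (inspan_ext (g := fun n => \sum_(i < M)
   (d (a i) * lcoef (F i%:Z) n + a i * lcoef (F (i + m)%N%:Z) n))); last first.
  apply: (@inspan_sum _ F M (fun i n => d (a i) * lcoef (F i%:Z) n + a i * lcoef (F (i + m)%N%:Z) n)) => i _.
  by apply: inspanD; apply: inspanZ; exact: inspanF.
move=> n.
have e2 := @lmul_lin _ (Hs h m) g M a (fun i => F i%:Z) M%:Z ha.
rewrite e2; last first.
  move=> i k hi hk; rewrite (proj2 (hF3 i%:Z) k) //; move: hi hk; lia.
rewrite ha raddf_sum -big_split /=; apply: eq_bigr => i _.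
rewrite hd -addrA -mulrDr; congr (_ + a i * _).
by rewrite PoszD hF2.
Qed.

Lemma lcoef_lscale (A : comPzRingType) (c : A) (f : laurent A) n :
  lcoef (lscale c f) n = c * lcoef f n.
Proof. by []. Qed.

Lemma CS_coef (A : comPzRingType) (h : nat -> nat -> A) (j k : nat) n :
  lcoef (CS h j k) n =
    (lcoef (Hs h (j + k)) n - lcoef (lmul (Hs h j) (Hs h k)) n) +
    (\sum_(i < k) Hc h j i.+1 * lcoef (Hs h (k - i.+1)) n +
     \sum_(i < j) Hc h k i.+1 * lcoef (Hs h (j - i.+1)) n).
Proof. by rewrite /CS /= !lcoef_lsum. Qed.

Lemma Hs_span (A : comPzRingType) (d : {additive A -> A}) (hd : is_derivation d)
    (m : nat) (hm : (1 <= m)%N) (h : nat -> nat -> A) (hcurve : integral_curve d h m)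
    (F : int -> laurent A) (hF : is_FdB d h m F) :
  forall k, inspan F (lcoef (Hs h k)).
Proof.
have hF' := hF; case: hF' => hF1 hF2 hF3.
elim/ltn_ind => k IH.
case: (ltnP k m) => hk.
  by apply: (inspan_ext _ (inspanF F k)) => n; rewrite hF1.
have ek : k = (m + (k - m))%N by rewrite subnKC.
set k' := (k - m)%N in ek *.
have hk' : (k' < k)%N by rewrite /k'; lia.
pose S1 := fun n => \sum_(i < k') Hc h m i.+1 * lcoef (Hs h (k' - i.+1)) n.
pose S2 := fun n => \sum_(i < m) Hc h k' i.+1 * lcoef (Hs h (m - i.+1)) n.
apply: (inspan_ext (g := fun n => (d (lcoef (Hs h k') n) + lcoef (lmul (Hs h m) (Hs h k')) n)
     + (-1) * (S1 n + S2 n))).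
  move=> n; have := hcurve k' n; rewrite CS_coef -/(S1 n) -/(S2 n) /= => ->.
  rewrite ek; ring.
apply: inspanD; first exact: (deriv_step hd hF (IH k' hk')).
apply: inspanZ; apply: inspanD.
  apply: (@inspan_sum _ F k' (fun i n => Hc h m i.+1 * lcoef (Hs h (k' - i.+1)) n)) => i hi.
  by apply: inspanZ; apply: IH; lia.
apply: (@inspan_sum _ F m (fun i n => Hc h k' i.+1 * lcoef (Hs h (m - i.+1)) n)) => i hi.
by apply: inspanZ; apply: IH; lia.
Qed.

Lemma sum_ext_zero (A : comPzRingType) (T T' : nat) (X : nat -> A) :
  (T <= T')%N -> (forall k, (T <= k)%N -> X k = 0) ->
  \sum_(k < T) X k = \sum_(k < T') X k.
Proof.
move=> hT hX; rewrite -(subnKC hT) big_split_ord /= [X in _ = _ + X]big1 ?addr0 //.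
by move=> k _; apply: hX; apply: leq_addr.
Qed.

Lemma trunc_le (x : int) (y : nat) : x <= y%:Z -> (trunc x <= y)%N.
Proof. by case: x => [k|k] //=; rewrite lez_nat. Qed.

Lemma pi_uniq (A : comPzRingType) (F : int -> laurent A)
    (hF3 : forall j : int, lcoef (F j) j = 1 /\ forall n, j < n -> lcoef (F j) n = 0)
    (f : laurent A) (c : int -> A) (N : nat) (g : int -> A) :
  decomp F f c N -> inspan F g -> (forall n : nat, lcoef f n%:Z = g n%:Z) ->
  forall n, lcoef (piplus F c N) n = g n.
Proof.
move=> [hc hdec] [M [a ha]] hfg.
pose a' := fun i : nat => if (i < M)%N then a i else 0.
pose K0 := (N + M).+1.
have hFz : forall (i : nat) (n : int), i%:Z < n -> lcoef (F i%:Z) n = 0.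
  by move=> i n hn; apply: (proj2 (hF3 i%:Z)).
have step1 : forall n' : nat,
    \sum_(k < K0) (c (n' + k)%N%:Z - a' (n' + k)%N) * lcoef (F (n' + k)%N%:Z) n'%:Z = 0.
  move=> n'.
  have e1 : lcoef f n'%:Z = \sum_(k < K0) c (n' + k)%N%:Z * lcoef (F (n' + k)%N%:Z) n'%:Z.
    rewrite hdec.
    rewrite (@sum_ext_zero _ _ K0 (fun k => c (n' + k)%N%:Z * lcoef (F (n' + k)%N%:Z) n'%:Z)).
    - by apply: eq_bigr => k _; rewrite PoszD.
    - apply: trunc_le; rewrite /K0; lia.
    - move=> k hk; rewrite hc ?mul0r //.
      have := trunc_ge (N%:Z - n'%:Z + 1); move: hk; lia.
  have e2 : g n'%:Z = \sum_(k < K0) a' (n' + k)%N * lcoef (F (n' + k)%N%:Z) n'%:Z.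
    rewrite ha (@sum_widen _ M (n' + K0) (fun i => a i * lcoef (F i%:Z) n'%:Z)); last first.
      by rewrite /K0; lia.
    rewrite big_split_ord /= big1 ?add0r.
      by apply: eq_bigr => k _; rewrite /a'; case: ifP; rewrite ?mul0r.
    move=> k _; case: ifP => _; rewrite ?hFz ?mulr0 //.
    by have := ltn_ord k; lia.
  under eq_bigr do rewrite mulrBl.
  by rewrite sumrB -e1 -e2 hfg subrr.
have step2 : forall t i : nat, (K0 <= i + t)%N -> c i%:Z = a' i.
  elim=> [|t IH] i hi.
    rewrite hc /a'; last by move: hi; rewrite /K0; lia.
    by case: ifP => //; move: hi; rewrite /K0; lia.
  have := step1 i; rewrite big_ord_recl /= big1 ?addr0.
    by rewrite addn0 (proj1 (hF3 _)) mulr1 => /eqP; rewrite subr_eq0 => /eqP.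
  move=> k _; rewrite IH ?subrr ?mul0r //; rewrite /bump /=; move: hi; lia.
move=> n.
rewrite /piplus lcoef_lsum ha.
have e3 : \sum_(i < N.+1) lcoef (lscale (c i%:Z) (F i%:Z)) n =
          \sum_(i < K0) a' i * lcoef (F i%:Z) n.
  rewrite (@sum_ext_zero _ _ K0 (fun i => lcoef (lscale (c i%:Z) (F i%:Z)) n)).
  - apply: eq_bigr => i _; rewrite lcoef_lscale (step2 K0) //; lia.
  - by rewrite /K0; lia.
  - by move=> k hk; rewrite lcoef_lscale hc ?mul0r //; lia.
rewrite e3 (@sum_widen _ M K0 (fun i => a i * lcoef (F i%:Z) n)); last by rewrite /K0; lia.
by apply: eq_bigr => i _; rewrite /a'; case: ifP; rewrite ?mul0r.
Qed.

Lemma HsPos (A : comPzRingType) (h : nat -> nat -> A) (k n : nat) :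
  lcoef (Hs h k) n%:Z = if n == k then 1 else 0.
Proof. by rewrite /= eqz_nat addr0. Qed.

Lemma ind_sum (A : comPzRingType) (a n : nat) (x : nat -> A) :
  \sum_(i < a) x i * (if n == (a - i.+1)%N then 1 else 0) =
  if (n < a)%N then x (a - n.+1)%N else 0.
Proof.
elim: a x => [|a IH] x; first by rewrite big_ord0.
rewrite big_ord_recl /= subn1 /=.
have -> : \sum_(i < a) x (bump 0 i) * (if n == (a.+1 - (bump 0 i).+1)%N then 1 else 0)
        = \sum_(i < a) x i.+1 * (if n == (a - i.+1)%N then 1 else 0).
  by apply: eq_bigr => i _.
rewrite (IH (fun i => x i.+1)) /=.
case: (ltngtP n a) => hn.
- rewrite mulr0 add0r ltnS (ltnW hn); congr x; lia.
- by rewrite mulr0 add0r ltnS leqNgt hn.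
- by rewrite -hn ltnSn subnn mulr1 addr0.
Qed.

Lemma prodHs (A : comPzRingType) (h : nat -> nat -> A) (j a n : nat) :
  lcoef (lmul (Hs h j) (Hs h a)) n%:Z = lcoef (Hs h (j + a)) n%:Z +
   (\sum_(i < a) Hc h j i.+1 * lcoef (Hs h (a - i.+1)) n%:Z +
    \sum_(i < j) Hc h a i.+1 * lcoef (Hs h (j - i.+1)) n%:Z).
Proof.
have h1 : forall k, j%:Z < k -> lcoef (Hs h j) k = 0 by move=> k hk; apply: (@lboundP _ (Hs h j) k hk).
have h2 : forall k, a%:Z < k -> lcoef (Hs h a) k = 0 by move=> k hk; apply: (@lboundP _ (Hs h a) k hk).
have h3 : j%:Z + a%:Z - n%:Z + 1 <= (a.+1 + j)%N%:Z by lia.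
rewrite (@lmulE _ (Hs h j) (Hs h a) n%:Z j%:Z a%:Z (a.+1 + j) h1 h2 h3).
rewrite /Ssum big_split_ord big_ord_recl /=.
rewrite [X in _ + X + _ = _]big1; last first.
  move=> i _; have hi := ltn_ord i.
  have -> : (a%:Z - (bump 0 i)%:Z == a%:Z) = false by rewrite /bump /=; lia.
  have -> : (a%:Z - (bump 0 i)%:Z < 0) = false by rewrite /bump /=; lia.
  by rewrite addr0 mulr0.
have e2 : forall i : 'I_j, 
   ((if n%:Z - a%:Z + (a.+1 + i)%N%:Z == j%:Z then 1 else 0) +
      (if n%:Z - a%:Z + (a.+1 + i)%N%:Z < 0 then Hc h j `|n%:Z - a%:Z + (a.+1 + i)%N%:Z| else 0)) *
     ((if a%:Z - (a.+1 + i)%N%:Z == a%:Z then 1 else 0) +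
      (if a%:Z - (a.+1 + i)%N%:Z < 0 then Hc h a `|(a%:Z - (a.+1 + i)%N%:Z)%R| else 0))
   = Hc h a i.+1 * (if n == (j - i.+1)%N then 1 else 0).
  move=> i; have hi := ltn_ord i.
  have -> : (n%:Z - a%:Z + (a.+1 + i)%N%:Z == j%:Z) = (n == (j - i.+1)%N) by lia.
  have -> : (n%:Z - a%:Z + (a.+1 + i)%N%:Z < 0) = false by lia.
  have -> : (a%:Z - (a.+1 + i)%N%:Z == a%:Z) = false by lia.
  have -> : (a%:Z - (a.+1 + i)%N%:Z < 0) = true by lia.
  have -> : `|(a%:Z - (a.+1 + i)%N%:Z)%R|%N = i.+1 by lia.
  by rewrite addr0 add0r mulrC.
rewrite (eq_bigr _ (fun i _ => e2 i)).
have e1 : forall i : 'I_a, Hc h j i.+1 * ((if n%:Z == (a - i.+1)%N%:Z then 1 else 0) + 0) =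
      Hc h j i.+1 * (if n == (a - i.+1)%N then 1 else 0) by move=> i; rewrite addr0 eqz_nat.
have e3 : forall i : 'I_j, Hc h a i.+1 * ((if n%:Z == (j - i.+1)%N%:Z then 1 else 0) + 0) =
      Hc h a i.+1 * (if n == (j - i.+1)%N then 1 else 0) by move=> i; rewrite addr0 eqz_nat.
rewrite (eq_bigr _ (fun i _ => e1 i)) (eq_bigr _ (fun i _ => e3 i)).
rewrite (ind_sum a n (fun i => Hc h j i.+1)).
have -> : (n%:Z - a%:Z + 0%Z == j%:Z) = (n%:Z == (j + a)%N%:Z) by lia.
have -> : (n%:Z - a%:Z + 0%Z < 0) = (n < a)%N by lia.
have -> : (a%:Z - 0%Z == a%:Z) = true by lia.
case: (boolP (n < a)%N) => hn; last by rewrite !addr0 mulr1 add0r.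
have -> : absz (n%:Z - a%:Z + 0%Z) = (a - n.+1).+1 by lia.
by rewrite !addr0 mulr1 addrA.
Qed.

Theorem mainTheorem10 (A : comPzRingType) (d : {additive A -> A})
    (hd : is_derivation d)
    (m : nat) (hm : (1 <= m)%N) (h : nat -> nat -> A)
    (hcurve : integral_curve d h m)
    (F : int -> laurent A) (hF : is_FdB d h m F) :
  (forall (j : nat) (c : int -> A) (N : nat),
      decomp F (lmono j%:Z) c N -> leqL (Hs h j) (piplus F c N))
  /\
  (forall (a j : nat), (1 <= a <= m)%N -> (1 <= j)%N ->
    forall (c1 : int -> A) (N1 : nat) (c2 : int -> A) (N2 : nat),
      decomp F (lmono j%:Z) c1 N1 ->
      decomp F (lmul (Hs h a) (piplus F c1 N1)) c2 N2 ->
      leqL (CS h j a) (lopp (piminus F (lmul (Hs h a) (piplus F c1 N1)) c2 N2))).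
Proof.
have hF' := hF; case: hF' => hF1 hF2 hF3.
have hspan := Hs_span hd hm hcurve hF.
have part1 : forall (j : nat) (c : int -> A) (N : nat),
    decomp F (lmono j%:Z) c N -> leqL (Hs h j) (piplus F c N).
  move=> j c N hdec n; symmetry.
  apply: (pi_uniq hF3 hdec (hspan j)) => n'.
  by rewrite HsPos /= eqz_nat.
split => //.
move=> a j _ _ c1 N1 c2 N2 hd1 hd2.
set P := lmul (Hs h a) (piplus F c1 N1).
have hP : forall n, lcoef P n = lcoef (lmul (Hs h j) (Hs h a)) n.
  move=> n; rewrite lmul_comm; apply: lmul_congr => // k.
  by rewrite (part1 j c1 N1 hd1).
pose G := fun n => lcoef (Hs h (j + a)) n +
   (\sum_(i < a) Hc h j i.+1 * lcoef (Hs h (a - i.+1)) n +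
    \sum_(i < j) Hc h a i.+1 * lcoef (Hs h (j - i.+1)) n).
have hG : inspan F G.
  apply: inspanD; first exact: hspan.
  apply: inspanD.
    apply: (@inspan_sum _ F a (fun i n => Hc h j i.+1 * lcoef (Hs h (a - i.+1)) n)) => i _.
    by apply: inspanZ.
  apply: (@inspan_sum _ F j (fun i n => Hc h a i.+1 * lcoef (Hs h (j - i.+1)) n)) => i _.
  by apply: inspanZ.
have hpi := pi_uniq hF3 hd2 hG.
move=> n.
have -> : lcoef (lopp (piminus F P c2 N2)) n = - (lcoef P n - lcoef (piplus F c2 N2) n) by [].
rewrite CS_coef hpi.
  by rewrite hP /G; ring.
by move=> n'; rewrite hP prodHs.
Qed.
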